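(* Let $n\geq 2$ be an integer and $t\in[0,1]$, and let \[ \mu_{0}= \frac{(3-2n)t+1-2n+\sqrt{(1-t)[(4n-5)t+4n^2-4n+1]} }{2(n-1)^2}. \] Then \[ -\frac{t}{n}\geq \mu_{0}\geq -\frac{t^2 + (2n+1)t}{n^2-t} \geq -\frac{2}{n-1}t. \] *)

(* Defs.v *)
From Stdlib Require Import Reals.
Open Scope R_scope.

Definition mu0 (n : nat) (t : R) : R :=
  let N := INR n in
  ((3 - 2 * N) * t + 1 - 2 * N
     + sqrt ((1 - t) * ((4 * N - 5) * t + 4 * N ^ 2 - 4 * N + 1)))
  / (2 * (N - 1) ^ 2).

(* Main.v *)
Require Import Defs.
From Stdlib Require Import Reals.
From Stdlib Require Import Lra Lia Psatz.
Open Scope R_scope.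

Theorem proposition5p2 (n : nat) (t : R) :
  (2 <= n)%nat -> 0 <= t <= 1 ->
  - t / INR n >= mu0 n t /\
  mu0 n t >= - (t ^ 2 + (2 * INR n + 1) * t) / (INR n ^ 2 - t) /\
  - (t ^ 2 + (2 * INR n + 1) * t) / (INR n ^ 2 - t) >= - (2 / (INR n - 1)) * t.
Proof.
  intros Hn [Ht0 Ht1].
  assert (HN : 2 <= INR n) by (replace 2 with (INR 2) by (simpl; ring); apply le_INR; lia).
  unfold mu0.
  set (N := INR n) in *.
  set (Q := (1 - t) * ((4 * N - 5) * t + 4 * N ^ 2 - 4 * N + 1)).
  assert (HQ : 0 <= Q) by (unfold Q; apply Rmult_le_pos; nra).
  set (x := sqrt Q).
  assert (Hx0 : 0 <= x) by apply sqrt_pos.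
  assert (Hxx : x * x = Q) by (apply sqrt_sqrt; exact HQ).
  set (A := (3 - 2 * N) * t + 1 - 2 * N).
  set (D := 2 * (N - 1) ^ 2).
  assert (HD : 0 < D) by (unfold D; nra).
  set (M := N ^ 2 - t).
  assert (HM : 0 < M) by (unfold M; nra).
  set (P := t ^ 2 + (2 * N + 1) * t).
  assert (HN1 : 0 < N - 1) by lra.
  split; [|split].
  -
    set (B := N * (2 * N - 1) + t * (N - 2)).
    assert (HB : 0 <= B) by (unfold B; nra).
    assert (HBQ : (x * N) * (x * N) <= B * B).
    { replace ((x * N) * (x * N)) with (Q * N * N) by (rewrite <- Hxx; ring).
      assert (E : B * B - Q * N * N =
        t * (4 * N * (N - 1) ^ 2 * (N + 1)) + t ^ 2 * ((N - 2) ^ 2 + N ^ 2 * (4 * N - 5)))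
        by (unfold B, Q; ring).
      assert (0 <= t * (4 * N * (N - 1) ^ 2 * (N + 1))).
      { apply Rmult_le_pos; [lra|]. repeat apply Rmult_le_pos; nra. }
      assert (0 <= t ^ 2 * ((N - 2) ^ 2 + N ^ 2 * (4 * N - 5))).
      { apply Rmult_le_pos; [nra|]. nra. }
      lra. }
    assert (HxB : x * N <= B) by nra.
    assert (Hd : - t / N - (A + x) / D = (- t * D - (A + x) * N) / (N * D))
      by (field; split; lra).
    assert (Hnum : 0 <= - t * D - (A + x) * N) by (unfold D, A; unfold B in HxB; nra).
    assert (0 <= (- t * D - (A + x) * N) / (N * D)).
    { unfold Rdiv; apply Rmult_le_pos; [lra| left; apply Rinv_0_lt_compat; nra]. }
    lra.
  - set (CM := (2 * N - 1 + (2 * N - 3) * t) * M - D * P).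
    assert (HxM : CM <= x * M).
    { destruct (Rle_lt_dec CM 0) as [h|h]; [nra|].
      assert (E : (x * M) * (x * M) - CM * CM =
         4 * t * (1 - t) * (N - 1) ^ 3 * (N + 1) * (N + t) ^ 2).
      { replace ((x * M) * (x * M)) with (Q * M * M) by (rewrite <- Hxx; ring).
        unfold CM, Q, M, D, P; ring. }
      assert (0 <= 4 * t * (1 - t) * (N - 1) ^ 3 * (N + 1) * (N + t) ^ 2).
      { repeat apply Rmult_le_pos; try lra; try nra; apply pow_le; lra. }
      assert (0 <= x * M) by nra. destruct (Rle_lt_dec CM (x * M)) as [g|g]; [exact g|]. assert ((x*M)*(x*M) < CM*CM) by (apply Rmult_le_0_lt_compat; lra). lra. }
    assert (Hd : (A + x) / D - - P / M = ((A + x) * M + P * D) / (D * M))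
      by (field; split; lra).
    assert (Hnum : 0 <= (A + x) * M + P * D) by (unfold CM, A in *; nra).
    assert (0 <= ((A + x) * M + P * D) / (D * M)).
    { unfold Rdiv; apply Rmult_le_pos; [lra| left; apply Rinv_0_lt_compat; nra]. }
    lra.
  - assert (Hd : - P / M - - (2 / (N - 1)) * t = (2 * t * M - P * (N - 1)) / (M * (N - 1)))
      by (field; split; lra).
    assert (Hnum : 2 * t * M - P * (N - 1) = t * (1 - t) * (N + 1)) by (unfold M, P; ring).
    assert (0 <= t * (1 - t) * (N + 1)) by (repeat apply Rmult_le_pos; lra).
    assert (0 <= (2 * t * M - P * (N - 1)) / (M * (N - 1))).
    { unfold Rdiv; apply Rmult_le_pos; [lra| left; apply Rinv_0_lt_compat; nra]. }
    fold P M. lra.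
Qed.
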